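(* Let $\mathscr{A}$ be a finite $\sigma$-structure and $k>0$. There is a bijective correspondence between $\mathbb{E}_k$-coalgebras $\alpha:\mathscr{A}\to\mathbb{E}_k\mathscr{A}$ and forest covers of the Gaifman graph $\mathcal{G}(\mathscr{A})$ of height $\le k$ (with universe $A$); under it, $\alpha$ corresponds to the order $a\le a'$ iff $\alpha(a)\sqsubseteq\alpha(a')$, and a forest cover corresponds to the map sending $a$ to the chain $[a_1,\dots,a_j]$ of its predecessors $a_1<\dots<a_j=a$.
   Context: $\mathbb{E}_k\mathscr{A}$: universe $A^{\le k}$ (non-empty sequences over $A$ of length $\le k$, ordered by prefix $\sqsubseteq$); $R(s_1,\dots,s_n)$ iff the $s_i$ are pairwise $\sqsubseteq$-comparable and $R^{\mathscr{A}}(\varepsilon s_1,\dots,\varepsilon s_n)$, where $\varepsilon[a_1,\dots,a_j]=a_j$. Comultiplication $\delta_{\mathscr{A}}[a_1,\dots,a_j]=[[a_1],[a_1,a_2],\dots,[a_1,\dots,a_j]]$; functor action on a homomorphism $h$: $\mathbb{E}_k h[a_1,\dots,a_j]=[h(a_1),\dots,h(a_j)]$. An $\mathbb{E}_k$-coalgebra on $\mathscr{A}$ is a homomorphism $\alpha:\mathscr{A}\to\mathbb{E}_k\mathscr{A}$ with $\delta_{\mathscr{A}}\circ\alpha=\mathbb{E}_k\alpha\circ\alpha$ and $\varepsilon_{\mathscr{A}}\circ\alpha=\mathrm{id}_A$. The Gaifman graph $\mathcal{G}(\mathscr{A})=(A,\frown)$: $a\frown a'$ iff $a\neq a'$ and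 both occur in some tuple of some relation $R^{\mathscr{A}}$. A forest is a poset in which the set of predecessors of each element is a finite chain; its height is the maximum size of a chain. A forest cover of a graph $(V,\frown)$ is a forest order $\le$ on $V$ such that $v\frown v'$ implies $v\le v'$ or $v'\le v$. *)

(* Defs.v *)
From mathcomp Require Import all_boot.
Set Implicit Arguments. Unset Strict Implicit. Unset Printing Implicit Defensive.

Section Defs.
Variables (Sym : Type) (ar : Sym -> nat) (A : finType)
          (interp : forall s : Sym, pred ((ar s).-tuple A)).

Definition pfx (s t : seq A) : bool := prefix s t.
Definition pfx_comparable (s t : seq A) : bool := pfx s t || pfx t s.

(* universe of E_k A : non-empty sequences of length <= k *)
Definition inEk (k : nat) (s : seq A) : bool := (0 < size s) && (size s <= k).

(* counit epsilon : last element (None on the empty sequence, which is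
   not in the universe of E_k A) *)
Definition eps (s : seq A) : option A :=
  if s is x :: s' then Some (last x s') else None.

Definition delta (s : seq A) : seq (seq A) := [seq take i s | i <- iota 1 (size s)].

Definition EkRel (s : Sym) (t : (ar s).-tuple (seq A)) : Prop :=
  pairwise pfx_comparable t /\
  exists t' : (ar s).-tuple A, map eps t = map Some t' /\ interp t'.

Definition Ek_coalgebra (k : nat) (alpha : A -> seq A) : Prop :=
  (forall a, inEk k (alpha a)) /\
  (forall (s : Sym) (t : (ar s).-tuple A), interp t -> EkRel (map_tuple alpha t)) /\
  (forall a, delta (alpha a) = map alpha (alpha a)) /\
  (forall a, eps (alpha a) = Some a).

Definition gaifman (a a' : A) : Prop :=
  a <> a' /\ exists (s : Sym) (t : (ar s).-tuple A), interp t /\ a \in t /\ a' \in t.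

Definition is_partial_order (le : rel A) : Prop :=
  reflexive le /\ antisymmetric le /\ transitive le.

Definition comparable (le : rel A) (x y : A) : bool := le x y || le y x.

Definition is_forest (le : rel A) : Prop :=
  is_partial_order le /\
  (* the predecessors of each element form a chain (finite since A is) *)
  (forall a b c, le b a -> le c a -> comparable le b c).

Definition height_le (le : rel A) (k : nat) : Prop :=
  forall C : {set A}, {in C &, forall x y, comparable le x y} -> #|C| <= k.

Definition forest_cover_le (k : nat) (le : rel A) : Prop :=
  is_forest le /\ height_le le k /\
  (forall a a', gaifman a a' -> comparable le a a').

Definition order_of_coalg (alpha : A -> seq A) : rel A :=
  fun a a' => pfx (alpha a) (alpha a').

Definition coalg_of_order (le : rel A) (a : A) : seq A :=
  sort le [seq b <- enum A | le b a].

End Defs.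

(* Main.v *)
Require Import Defs.
From mathcomp Require Import all_boot.
Set Implicit Arguments. Unset Strict Implicit. Unset Printing Implicit Defensive.
Set Default Proof Using "All".

Lemma pw_mem (T : finType) (r : rel T) (s : seq T) :
  symmetric r -> pairwise r s ->
  forall x y, x \in s -> y \in s -> x != y -> r x y.
Proof.
move=> rs /(pairwiseP (T:=T)) P x y /(nthP x)[i hi <-] /(nthP x)[j hj <-] ne.
case: (ltngtP i j) => h.
- exact: P.
- by rewrite rs; apply: P.
- by subst; rewrite eqxx in ne.
Qed.

Lemma eps_rcons (T : finType) (s : seq T) z : eps (rcons s z) = Some z.
Proof. by case: s => //= x s'; rewrite last_rcons. Qed.

Lemma eps_nth (T : finType) (s : seq T) x0 :
  0 < size s -> eps s = Some (nth x0 s (size s).-1).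
Proof. by case: s => //= x s' _; rewrite -[last _ _](nth_last x0 (x :: s')). Qed.

Lemma pfx_eq_size (T : finType) (s t : seq T) : prefix s t -> size s = size t -> s = t.
Proof. by rewrite prefixE => /eqP E hs; rewrite -E hs take_size. Qed.

Lemma take_comp (T : finType) (u : seq T) m n :
  prefix (take m u) (take n u) || prefix (take n u) (take m u).
Proof.
case: (leqP m n) => h.
  by rewrite -{1}(take_takel u h) prefix_take.
by rewrite -{2}(take_takel u (ltnW h)) prefix_take orbT.
Qed.

Lemma pfx_comp (T : finType) (s t u : seq T) :
  prefix s u -> prefix t u -> prefix s t || prefix t s.
Proof.
move=> hs ht.
have Hs : s = take (size s) u by apply/esym/eqP; rewrite -prefixE.
have Ht : t = take (size t) u by apply/esym/eqP; rewrite -prefixE.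
rewrite Hs Ht; exact: take_comp.
Qed.

Lemma delta_nth (T : finType) (s : seq T) x0 (f : T -> seq T) :
  (forall i, i < size s -> f (nth x0 s i) = take i.+1 s) -> delta s = map f s.
Proof.
move=> H; rewrite /delta; apply: (@eq_from_nth _ [::]).
  by rewrite !size_map size_iota.
move=> i; rewrite size_map size_iota => hi.
by rewrite (nth_map 0) ?size_iota // (nth_map x0) // nth_iota // add1n H.
Qed.

Section Forest.
Variables (A : finType) (le : rel A).
Hypotheses (refl : reflexive le) (anti : antisymmetric le) (trans : transitive le)
  (chain : forall a b c, le b a -> le c a -> Defs.comparable le b c).

Let al := coalg_of_order le.

Lemma F_mem a b : (b \in al a) = le b a.
Proof. by rewrite /al /coalg_of_order mem_sort mem_filter mem_enum andbT. Qed.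

Lemma F_uniq a : uniq (al a).
Proof. by rewrite /al /coalg_of_order sort_uniq filter_uniq // enum_uniq. Qed.

Lemma F_pw a : pairwise le (al a).
Proof.
rewrite -sorted_pairwise //; rewrite /al /coalg_of_order.
apply: (sort_sorted_in (P := fun b => le b a)).
  by move=> x y hx hy; exact: (chain hx hy).
exact: filter_all.
Qed.

Lemma F_unique a s : uniq s -> pairwise le s -> (forall b, (b \in s) = le b a) -> s = al a.
Proof.
move=> us ps ms; apply: (pairwise_eq anti) => //; first exact: F_pw.
by apply: uniq_perm => //; [exact: F_uniq | move=> b; rewrite ms F_mem].
Qed.

Lemma F_split x y : le x y -> al y = al x ++ filter (predC (fun b => le b x)) (al y).
Proof.
move=> lxy.
have E : al x = filter (fun b => le b x) (al y).
  symmetry; apply: F_unique; first by rewrite filter_uniq // F_uniq.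
    exact: pairwise_filter (F_pw y).
  move=> b; rewrite mem_filter F_mem.
  by apply/andP/idP => [[]//|h]; split => //; exact: trans lxy.
rewrite E; apply: (pairwise_eq anti); first exact: F_pw.
  rewrite pairwise_cat; apply/and3P; split; try exact: pairwise_filter (F_pw y).
  apply/allrelP => b c; rewrite !mem_filter !F_mem /= => /andP[bx bY] /andP[cx cY].
  case/orP: (chain bY cY) => // cb.
  by rewrite (trans cb bx) in cx.
by rewrite perm_sym perm_filterC.
Qed.

Lemma F_prefix x y : le x y -> prefix (al x) (al y).
Proof. by move=> h; rewrite (F_split h) prefix_prefix. Qed.

Lemma F_prefix_conv x y : prefix (al x) (al y) -> le x y.
Proof.
move=> /prefixP[s E]; rewrite -F_mem E mem_cat F_mem refl //.
Qed.

Lemma F_rcons a : exists s, al a = rcons s a /\ a \notin s.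
Proof.
have ha : a \in al a by rewrite F_mem.
have P := F_pw a; have M := F_mem a; have U := F_uniq a.
move: ha P M U; case/lastP: (al a) => [|s z] //.
move=> ha P M U; have zs : z = a.
  apply: anti; rewrite -M mem_rcons mem_head /=.
  move: ha; rewrite mem_rcons in_cons => /orP[/eqP -> //|hs].
  by move: P; rewrite pairwise_rcons => /andP[/allP /(_ a hs)].
subst z; exists s; split => //.
by move: U; rewrite rcons_uniq => /andP[].
Qed.

Lemma F_eps a : eps (al a) = Some a.
Proof. by have [s [-> _]] := F_rcons a; rewrite eps_rcons. Qed.

Lemma F_delta a : delta (al a) = map al (al a).
Proof.
apply: (@delta_nth A (al a) a al) => i hi.
set b := nth a (al a) i.
have lb : le b a by rewrite -F_mem mem_nth.
rewrite (F_split lb) take_size_cat //.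
have := index_uniq a hi (F_uniq a); rewrite -/b (F_split lb) index_cat.
have [s [Es ns]] := F_rcons b.
rewrite Es mem_rcons mem_head -cats1 index_cat (negbTE ns) /= eqxx addn0.
by rewrite size_cat /= addn1 => ->.
Qed.

End Forest.

Section Coalg.
Variables (A : finType) (alpha : A -> seq A) (k : nat).
Hypotheses (Hin : forall a, inEk k (alpha a))
  (Hdelta : forall a, delta (alpha a) = map alpha (alpha a))
  (Heps : forall a, eps (alpha a) = Some a).

Let le := order_of_coalg alpha.

Lemma C_nth a i : i < size (alpha a) -> alpha (nth a (alpha a) i) = take i.+1 (alpha a).
Proof.
move=> hi; have := congr1 (fun s => nth [::] s i) (Hdelta a).
by rewrite /delta (nth_map 0) ?size_iota // nth_iota // (nth_map a) // add1n => <-.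
Qed.

Lemma C_inj x y : alpha x = alpha y -> x = y.
Proof. by move=> E; have := Heps x; rewrite E Heps => -[]. Qed.

Lemma C_anti : antisymmetric le.
Proof.
move=> x y; rewrite /le /order_of_coalg /pfx => /andP[h1 h2]; apply: C_inj.
have hs : size (alpha x) = size (alpha y) by apply/eqP; rewrite eqn_leq (size_prefix h1) (size_prefix h2).
exact: (pfx_eq_size h1 hs).
Qed.

Lemma C_trans : transitive le.
Proof. move=> y x z; exact: prefix_trans. Qed.

Lemma C_refl : reflexive le.
Proof. move=> x; exact: prefix_refl. Qed.

Lemma C_mem a b : (b \in alpha a) = le b a.
Proof.
apply/idP/idP.
  move=> /(nthP a)[i hi <-]; rewrite /le /order_of_coalg /pfx C_nth //.
  exact: prefix_take.
rewrite /le /order_of_coalg /pfx => hp.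
have hs := size_prefix hp.
have n0 : 0 < size (alpha b) by case/andP: (Hin b).
move: hp; rewrite prefixE => /eqP E.
have := Heps b; rewrite -E (eps_nth a); last by rewrite size_takel.
rewrite size_takel // nth_take ?prednK // => -[<-].
by apply: mem_nth; rewrite prednK.
Qed.

Lemma C_uniq a : uniq (alpha a).
Proof.
apply/(uniqP a) => i j hi hj E.
have := congr1 alpha E; rewrite !C_nth // => E2.
by have := congr1 size E2; rewrite !size_takel // => /eqP; rewrite eqSS => /eqP.
Qed.

Lemma C_pw a : pairwise le (alpha a).
Proof.
apply/(pairwiseP a) => i j hi hj lt.
rewrite /le /order_of_coalg /pfx !C_nth //.
rewrite -(take_takel (alpha a) (ltnW (lt : i.+1 < j.+1))); exact: prefix_take.
Qed.

Lemma C_chain a b c : le b a -> le c a -> Defs.comparable le b c.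
Proof. exact: pfx_comp. Qed.

Lemma C_height : height_le le k.
Proof.
move=> C hC; rewrite cardE.
have -> : size (enum C) = size (map (fun x => size (alpha x)) (enum C)) by rewrite size_map.
rewrite -(size_iota 1 k); apply: uniq_leq_size.
  rewrite map_inj_in_uniq ?enum_uniq // => x y; rewrite !mem_enum => hx hy E.
  apply: C_inj; case/orP: (hC x y hx hy) => h.
    exact: pfx_eq_size h E.
  by symmetry; apply: pfx_eq_size h (esym E).
move=> n /mapP[x _ ->]; rewrite mem_iota add1n.
by have := Hin x; rewrite /inEk ltnS.
Qed.

Lemma C_order a : coalg_of_order le a = alpha a.
Proof.
apply: (sorted_eq C_trans C_anti).
- apply: (sort_sorted_in (P := fun b => le b a)).
    by move=> x y hx hy; exact: (C_chain hx hy).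
  exact: filter_all.
- by rewrite sorted_pairwise; [exact: C_pw | exact: C_trans].
- apply: uniq_perm; first by rewrite sort_uniq filter_uniq // enum_uniq.
    exact: C_uniq.
  by move=> b; rewrite mem_sort mem_filter mem_enum andbT C_mem.
Qed.

End Coalg.

Theorem mainTheorem11 (Sym : Type) (ar : Sym -> nat) (A : finType)
    (interp : forall s : Sym, pred ((ar s).-tuple A)) (k : nat) (hk : 0 < k) :
  (forall alpha : A -> seq A, Ek_coalgebra interp k alpha ->
      forest_cover_le interp k (order_of_coalg alpha)) /\
  (forall le : rel A, forest_cover_le interp k le ->
      Ek_coalgebra interp k (coalg_of_order le)) /\
  (forall alpha : A -> seq A, Ek_coalgebra interp k alpha ->
      forall a, coalg_of_order (order_of_coalg alpha) a = alpha a) /\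
  (forall le : rel A, forest_cover_le interp k le ->
      forall a a', order_of_coalg (coalg_of_order le) a a' = le a a').
Proof.
split; [|split; [|split]].
- move=> alpha [Hin [Hom [Hd He]]]; split; last split.
  + split; first by split; [exact: C_refl | split; [exact: C_anti | exact: C_trans]].
    exact: C_chain.
  + exact: C_height.
  + move=> x y [ne [s [t [it [xt yt]]]]].
    have [P _] := Hom s t it.
    move: P => /=; rewrite pairwise_map => P.
    apply: (pw_mem _ P) => //; last by apply/eqP.
    by move=> u v; unfold pfx_comparable; apply: orbC.
- move=> le [[[refl [anti trans]] chain] [hh gf]]; split; last split; last split.
  + move=> a; rewrite /inEk; apply/andP; split.
      by case: (coalg_of_order le a) (F_mem refl anti trans chain a a) => //; rewrite refl.
    have U := F_uniq refl anti trans chain a.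
    have := hh [set x in coalg_of_order le a].
    rewrite cardsE (card_uniqP U); apply => x y; rewrite !inE !(F_mem refl anti trans chain) => hx hy.
    exact: chain hx hy.
  + move=> s t it; split.
      rewrite /= pairwise_map (pairwise_all2rel (r := fun x y => pfx_comparable (coalg_of_order le x) (coalg_of_order le y))).
      * apply/allrelP => x y xt yt.
        have [->|ne] := eqVneq x y; first by rewrite /pfx_comparable /pfx prefix_refl.
        have : gaifman interp x y by split; [exact/eqP | exists s, t].
        move/gf => /orP[h|h]; rewrite /pfx_comparable /pfx (F_prefix refl anti trans chain h) ?orbT //.
      * by move=> x; rewrite /pfx_comparable /pfx prefix_refl.
      * by move=> x y; rewrite /pfx_comparable orbC.
    exists t; split => //.
    rewrite /= -map_comp; apply: eq_map => x /=; exact: (F_eps refl anti trans chain).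
  + move=> a; exact: (F_delta refl anti trans chain).
  + move=> a; exact: (F_eps refl anti trans chain).
- move=> alpha [Hin [Hom [Hd He]]] a; exact: C_order.
- move=> le [[[refl [anti trans]] chain] _] a a'.
  rewrite /order_of_coalg /pfx; apply/idP/idP.
    exact: F_prefix_conv.
  exact: F_prefix.
Qed.
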